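(* Let $n\in\mathbb{Z}$. The standard holomorphic structure $\overline{\nabla}=\overline{\nabla}_{(n)}$ on $\mathcal{L}_n$ is a bimodule connection with associated bimodule isomorphism $\Phi_{(n)}$; that is, for all $\eta\in\mathcal{L}_n$ and $f\in\mathcal{A}(\mathbb{CP}^1_q)$, $$\overline{\nabla}(\eta f)=\overline{\nabla}(\eta)\,f+\Phi_{(n)}(\eta\otimes\bar\partial f).$$
   Context: Fix $0<q<1$. Let $\mathcal{A}(SU_q(2))$ be the unital complex $*$-algebra generated by $a,c$ subject to $ac=qca$, $ac^*=qc^*a$, $cc^*=c^*c$, $a^*a+c^*c=aa^*+q^2cc^*=1$. Let $U_q(su(2))$ be the Hopf algebra generated by $K,K^{-1},E,F$ with $KK^{-1}=K^{-1}K=1$, $KE=qEK$, $KF=q^{-1}FK$, $EF-FE=(K^2-K^{-2})/(q-q^{-1})$, coproduct $\Delta K=K\otimes K$, $\Delta E=E\otimes K+K^{-1}\otimes E$, $\Delta F=F\otimes K+K^{-1}\otimes F$, counit $\epsilon(K)=1$, $\epsilon(E)=\epsilon(F)=0$. It acts on $\mathcal{A}(SU_q(2))$ from the left making it a left module algebra, with $K\triangleright a=q^{-1/2}a$, $K\triangleright c=q^{-1/2}c$, $K\triangleright a^*=q^{1/2}a^*$, $K\triangleright c^*=q^{1/2}c^*$, $E\triangleright a=-qc^*$, $E\triangleright c=a^*$, $E\triangleright a^*=E\triangleright c^*=0$, $F\triangleright a=F\triangleright c=0$, $F\triangleright a^*=c$, $F\triangleright c^*=-q^{-1}a$. Put $X_-=q^{-1/2}FK$.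 For $n\in\mathbb{Z}$ let $\mathcal{L}_n=\{x:K\triangleright x=q^{n/2}x\}$ and $\mathcal{A}(\mathbb{CP}^1_q):=\mathcal{L}_0$ (write $\mathcal{B}$ for it); each $\mathcal{L}_n$ is a $\mathcal{B}$-bimodule and $X_-\triangleright\mathcal{L}_n\subseteq\mathcal{L}_{n-2}$. Let $\Omega^1(SU_q(2))$ be the $\mathcal{A}(SU_q(2))$-bimodule which is free as a left module with basis $\omega_+,\omega_-,\omega_z$, with right multiplication determined by $\omega_\pm x=q^kx\omega_\pm$, $\omega_zx=q^{2k}x\omega_z$ for $x\in\mathcal{L}_k$. Put $\Omega^{(0,1)}(\mathbb{CP}^1_q):=\mathcal{L}_{-2}\omega_-$ and $\bar\partial f:=(X_-\triangleright f)\omega_-$ for $f\in\mathcal{B}$. The multiplication maps $\mu_1:\mathcal{L}_n\otimes_{\mathcal{B}}\Omega^{(0,1)}(\mathbb{CP}^1_q)\to\mathcal{L}_{n-2}\omega_-$ and $\mu_2:\Omega^{(0,1)}(\mathbb{CP}^1_q)\otimes_{\mathcal{B}}\mathcal{L}_n\to\mathcal{L}_{n-2}\omega_-$ (products taken in $\Omega^1(SU_q(2))$) are $\mathcal{B}$-bimodule isomorphisms; set $\Phi_{(n)}:=\mu_2^{-1}\circ\mu_1$. The standard holomorphic structure on $\mathcal{L}_n$ is $\overline{\nabla}_{(n)}:\mathcal{L}_n\to\Omega^{(0,1)}(\mathbb{CP}^1_q)\otimes_{\mathcal{B}}\mathcal{L}_n$, $\overline{\nabla}_{(n)}(\phi):=\mu_2^{-1}\big((X_-\triangleright\phi)\,\omega_-\big)$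 (equivalently $q^{-n+2}\omega_-(X_-\triangleright\phi)$); it satisfies the left Leibniz rule $\overline{\nabla}(f\phi)=f\overline{\nabla}(\phi)+\bar\partial f\otimes\phi$. Right multiplication by $f\in\mathcal{B}$ on $\Omega^{(0,1)}\otimes_{\mathcal{B}}\mathcal{L}_n$ acts on the $\mathcal{L}_n$ factor. *)

(* Defs.v *)
From HB Require Import structures.
From mathcomp Require Import all_boot all_order all_algebra.
From mathcomp Require Import reals.
From mathcomp Require Import complex.
From Stdlib Require Import ClassicalEpsilon.

Set Implicit Arguments.
Unset Strict Implicit.
Unset Printing Implicit Defensive.

Import Order.TTheory GRing.Theory Num.Theory.
Local Open Scope ring_scope.
Local Open Scope complex_scope.

Section StarAlg.
Variable R : realType.
Local Notation C := (complex R).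

Definition is_star (A : algType C) (s : A -> A) : Prop :=
  [/\ (forall x y, s (x + y) = s x + s y),
      (forall (k : C) x, s (k *: x) = (conjc k) *: s x),
      (forall x y, s (x * y) = s y * s x) &
      (forall x, s (s x) = x)].

Definition star_alg_hom (A B : algType C) (sA : A -> A) (sB : B -> B)
    (f : A -> B) : Prop :=
  [/\ (forall x y, f (x + y) = f x + f y),
      (forall (k : C) x, f (k *: x) = k *: f x),
      (forall x y, f (x * y) = f x * f y),
      f 1 = 1 &
      (forall x, f (sA x) = sB (f x))].

Definition SUq2_rel (q : R) (A : algType C) (s : A -> A) (a c : A) : Prop :=
  [/\ a * c = q%:C *: (c * a),
      a * s c = q%:C *: (s c * a),
      c * s c = s c * c,
      s a * a + s c * c = 1 &
      a * s a + (q%:C ^+ 2) *: (c * s c) = 1].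

Definition is_ASUq2 (q : R) (A : algType C) (s : A -> A) (a c : A) : Prop :=
  is_star s /\ SUq2_rel q s a c /\
  forall (B : algType C) (sB : B -> B) (a' c' : B),
    is_star sB -> SUq2_rel q sB a' c' ->
    (exists f : A -> B, star_alg_hom s sB f /\ f a = a' /\ f c = c') /\
    (forall f g : A -> B,
        star_alg_hom s sB f -> f a = a' -> f c = c' ->
        star_alg_hom s sB g -> g a = a' -> g c = c' ->
        forall x, f x = g x).
End StarAlg.

Section Action.
Variable R : realType.
Local Notation C := (complex R).
Variable q : R.
Variable A : algType C.

Definition qC : C := q%:C.
Definition qh : C := (Num.sqrt q)%:C.

Definition Clinear (f : A -> A) : Prop :=
  forall (k : C) x y, f (k *: x + y) = k *: f x + f y.

Definition Uq_module_algebra (K Ki E F : A -> A) : Prop :=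
  [/\ [/\ Clinear K, Clinear Ki, Clinear E & Clinear F],
      [/\ (forall x, K (Ki x) = x), (forall x, Ki (K x) = x),
          (forall x, K (E x) = qC *: E (K x)),
          (forall x, K (F x) = qC^-1 *: F (K x)) &
          (forall x, E (F x) - F (E x) =
                     (qC - qC^-1)^-1 *: (K (K x) - Ki (Ki x)))],
      [/\ (forall x y, K (x * y) = K x * K y),
          (forall x y, Ki (x * y) = Ki x * Ki y),
          (forall x y, E (x * y) = E x * K y + Ki x * E y) &
          (forall x y, F (x * y) = F x * K y + Ki x * F y)] &
      [/\ K 1 = 1, Ki 1 = 1, E 1 = 0 & F 1 = 0]].

Definition Uq_action_gens (s : A -> A) (a c : A) (K E F : A -> A) : Prop :=
  [/\ [/\ K a = qh^-1 *: a, K c = qh^-1 *: c,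
          K (s a) = qh *: s a & K (s c) = qh *: s c],
      [/\ E a = - qC *: s c, E c = s a, E (s a) = 0 & E (s c) = 0] &
      [/\ F a = 0, F c = 0, F (s a) = c & F (s c) = - qC^-1 *: a]].

Variable K F : A -> A.

Definition Xm (x : A) : A := qh^-1 *: F (K x).

(* L_k = { x | K |> x = q^{k/2} x } ; B = A(CP^1_q) = L_0 *)
Definition inL (k : int) (x : A) : Prop := K x = (qh ^ k) *: x.

(* Omega^1(SU_q(2)) : free left module on omega_+, omega_-, omega_z,   *)
(* an element  x omega_+ + y omega_- + z omega_z  is ((x, y), z).       *)
Definition Om := (A * A * A)%type.
Definition om_minus (g : A) : Om := (0, g, 0).
Definition om_lmul (x : A) (w : Om) : Om := (x * w.1.1, x * w.1.2, x * w.2).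
(* right multiplication by an element y of L_k:
   omega_pm y = q^k y omega_pm,  omega_z y = q^{2k} y omega_z *)
Definition om_rmul (k : int) (w : Om) (y : A) : Om :=
  (qC ^ k *: (w.1.1 * y), qC ^ k *: (w.1.2 * y), qC ^ (k *+ 2) *: (w.2 * y)).

(* Omega^{(0,1)}(CP^1_q) = L_{-2} omega_- *)
Definition inO01 (w : Om) : Prop := exists2 g, inL (-2) g & w = om_minus g.

Definition dbar (f : A) : Om := om_minus (Xm f).

(* The balanced tensor product Omega^{(0,1)} (x)_B L_n : finite formal  *)
(* sums (lists) of pairs (w, phi) with w in Omega^{(0,1)}, phi in L_n,  *)
(* modulo the congruence generated by biadditivity and B-balancedness.  *)
Definition tvalid (n : int) (T : seq (Om * A)) : Prop :=
  forall p, p \in T -> inO01 p.1 /\ inL n p.2.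

Inductive tens_eq (n : int) : seq (Om * A) -> seq (Om * A) -> Prop :=
| te_refl T : tens_eq n T T
| te_sym T U : tens_eq n T U -> tens_eq n U T
| te_trans T U V : tens_eq n T U -> tens_eq n U V -> tens_eq n T V
| te_cat T T' U U' : tens_eq n T U -> tens_eq n T' U' ->
                     tens_eq n (T ++ T') (U ++ U')
| te_swap T U : tens_eq n (T ++ U) (U ++ T)
| te_zero phi : inL n phi -> tens_eq n [:: (0, phi)] [::]
| te_addl w w' phi : inO01 w -> inO01 w' -> inL n phi ->
                     tens_eq n [:: (w + w', phi)] [:: (w, phi); (w', phi)]
| te_addr w phi phi' : inO01 w -> inL n phi -> inL n phi' ->
                     tens_eq n [:: (w, phi + phi')] [:: (w, phi); (w, phi')]
| te_bal w b phi : inO01 w -> inL 0 b -> inL n phi ->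
                     tens_eq n [:: (om_rmul 0 w b, phi)] [:: (w, b * phi)].

Definition tens_rmul (T : seq (Om * A)) (f : A) : seq (Om * A) :=
  [seq (p.1, p.2 * f) | p <- T].

Definition mu2 (n : int) (T : seq (Om * A)) : Om :=
  \sum_(p <- T) om_rmul n p.1 p.2.

Definition mu1 (S : seq (A * Om)) : Om := \sum_(p <- S) om_lmul p.1 p.2.

Definition mu2_iso (n : int) : Prop :=
  (forall T U, tvalid n T -> tvalid n U -> mu2 n T = mu2 n U -> tens_eq n T U)
  /\ (forall g, inL (n - 2) g -> exists T, tvalid n T /\ mu2 n T = om_minus g).

(* mu_2^{-1} (a chosen representative of the preimage) *)
Definition mu2inv (n : int) (w : Om) : seq (Om * A) :=
  epsilon (inhabits [::]) (fun T => tvalid n T /\ mu2 n T = w).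

Definition Phi (n : int) (S : seq (A * Om)) : seq (Om * A) := mu2inv n (mu1 S).

Definition nablabar (n : int) (phi : A) : seq (Om * A) :=
  mu2inv n (om_minus (Xm phi)).

End Action.

(* Main.v *)
Require Import Defs.
From HB Require Import structures.
From mathcomp Require Import all_boot all_order all_algebra.
From mathcomp Require Import reals.
From mathcomp Require Import complex.
From Stdlib Require Import ClassicalEpsilon.
From mathcomp Require Import ring.
Import Order.TTheory GRing.Theory Num.Theory.
Local Open Scope ring_scope.

Set Implicit Arguments.
Unset Strict Implicit.
Section Aux.
Variable R : realType.
Variable A : algType (complex R).

Lemma Clin0 (f : A -> A) : Clinear f -> f 0 = 0.
Proof. move=> h; have := h 1 0 0; rewrite !scale1r !addr0 => e.
by apply: (@addrI _ (f 0)); rewrite -e addr0. Qed.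

Lemma ClinZ (f : A -> A) (h : Clinear f) k x : f (k *: x) = k *: f x.
Proof. by  have := h k x 0; rewrite !addr0 (Clin0 h) addr0. Qed.

Definition rm (w : Om A) (f : A) : Om A := (w.1.1 * f, w.1.2 * f, w.2 * f).

Lemma mu2_rmul (q : R) (n : int) (T : seq (Om A * A)) f :
  mu2 q n (tens_rmul T f) = rm (mu2 q n T) f.
Proof.
elim: T => [|p T IH].
  by rewrite /mu2 /tens_rmul !big_nil /rm /= !mul0r.
have -> : tens_rmul (p::T) f = (p.1, p.2*f) :: tens_rmul T f by [].
rewrite /mu2 !big_cons -!/(mu2 q n _) IH.
case: p => [[[x y] z] phi] /=; case: (mu2 q n T) => [[u v] w].
by rewrite /rm /om_rmul /= !mulrDl !mulrA !scalerAl.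
Qed.

Lemma mu2_cat (q : R) (n : int) (T U : seq (Om A * A)) :
  mu2 q n (T ++ U) = mu2 q n T + mu2 q n U.
Proof. by rewrite /mu2 big_cat. Qed.

Lemma mu2inv_spec (q : R) (K : A -> A) (n : int) (w : Om A) :
  (exists T, tvalid q K n T /\ mu2 q n T = w) ->
  tvalid q K n (mu2inv q K n w) /\ mu2 q n (mu2inv q K n w) = w.
Proof. move=> h; rewrite /mu2inv; exact (epsilon_spec _ (fun T => tvalid q K n T /\ mu2 q n T = w) h). Qed.

End Aux.

Theorem proposition3p7
  (R : realType) (q : R) (hq0 : 0 < q) (hq1 : q < 1)
  (A : algType (complex R)) (s : A -> A) (a c : A)
  (hA : is_ASUq2 q s a c)
  (K Ki E F : A -> A)
  (hact : Uq_module_algebra q K Ki E F)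
  (hgens : Uq_action_gens q s a c K E F)
  (n : int) (hmu2 : mu2_iso q K n)
  (eta f : A) (heta : inL q K n eta) (hf : inL q K 0 f) :
  tens_eq q K n
    (nablabar q K F n (eta * f))
    (tens_rmul (nablabar q K F n eta) f ++ Phi q K n [:: (eta, dbar q K F f)]).
Proof.
case: hact => [[lK lKi lE lF] [KKi KiK KE KF _] [KM KiM _ FM] _].
have qh0 : qh q != 0.
  by rewrite /qh fmorph_eq0 sqrtr_eq0 -ltNge.
have qh2 : qh q ^+ 2 = qC q.
  by rewrite /qh /qC -rmorphXn /= sqr_sqrtr // ltW.
have Kf : K f = f by move: hf; rewrite /inL expr0z scale1r.
have XmL : forall k x, inL q K k x -> inL q K (k - 2) (Xm q K F x).
  move=> k x hx; rewrite /inL /Xm.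
  rewrite (ClinZ lK) KF hx !(ClinZ lK) hx (ClinZ lF) !(ClinZ lF).
  rewrite !scalerA; congr (_ *: _).
  rewrite (expfzDr _ _ qh0) -exprnN qh2; ring.
have KML : forall k x, inL q K k x -> inL q K k (x * f).
  by move=> k x hx; rewrite /inL KM hx Kf scalerAl.
have KML2 : forall k x, inL q K k x -> inL q K (n + k) (eta * x).
  move=> k x hx; rewrite /inL KM hx heta -scalerAl -scalerAr scalerA.
  by rewrite (expfzDr _ _ qh0).
have XmM : Xm q K F (eta * f) = Xm q K F eta * f + eta * Xm q K F f.
  by rewrite /Xm KM Kf FM Kf KiK scalerDr scalerAl scalerAr.
have Lef : inL q K n (eta * f) by rewrite -[n]addr0; apply: KML2.
have [v1 e1] := mu2inv_spec (hmu2.2 _ (XmL _ _ Lef)).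
have [v2 e2] := mu2inv_spec (hmu2.2 _ (XmL _ _ heta)).
have L3 : inL q K (n - 2) (eta * Xm q K F f).
  by rewrite -[n - 2]/(n + (0 - 2)); apply: KML2; apply: XmL.
have [v3 e3] := mu2inv_spec (hmu2.2 _ L3).
have h3 : Phi q K n [:: (eta, dbar q K F f)] = mu2inv q K n (om_minus (eta * Xm q K F f)).
  by rewrite /Phi /mu1 big_seq1 /om_lmul /= !mulr0.
rewrite /nablabar h3.
apply: hmu2.1 => //.
- move=> p; rewrite mem_cat => /orP [].
    case/mapP=> p0 /v2 [o1 o2] -> /=; split => //; exact: KML.
  exact: v3.
rewrite mu2_cat mu2_rmul e1 e2 e3 XmM /rm /om_minus /= !mul0r.
have addE : forall x y : Om A, x + y = (x.1.1+y.1.1, x.1.2+y.1.2, x.2+y.2) by [].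
by rewrite addE /= !addr0.
Qed.
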